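(* Let $\mathcal{H}$ be a Hilbert space, $\mathcal{H}_1$ a closed subspace with $\{0\}\ne\mathcal{H}_1\ne\mathcal{H}$, $P:\mathcal{H}\to\mathcal{H}_1$ the orthogonal projection onto $\mathcal{H}_1$, $Q:\mathcal{H}\to\mathcal{H}_1^\perp$ the orthogonal projection onto $\mathcal{H}_1^\perp$, $H\ge0$ a bounded selfadjoint operator on $\mathcal{H}$, $H_t:=H+tQ^*Q$, $\lambda_t:=\min\sigma(H_t)$ and $\lambda_\infty:=\min\sigma(PHP^* )$ (with $PHP^*$ regarded as an operator on $\mathcal{H}_1$). Then $\lambda_\infty\ge\lambda_t$ for all $t\ge0$, and for $t\ge2\|H+1\|^2$, $$\lambda_t\ge\lambda_\infty-\frac{4\|H+1\|^2(\lambda_\infty+1)^2}{t+1}\ge\lambda_\infty-\frac{4\|H+1\|^4}{t+1}.$$ *)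

(* Defs.v *)
From mathcomp Require Import all_boot all_order all_algebra.
From mathcomp Require Import complex.
From mathcomp Require Import classical_sets reals.
Set Implicit Arguments. Unset Strict Implicit. Unset Printing Implicit Defensive.
Import Order.TTheory GRing.Theory Num.Theory.
Local Open Scope ring_scope.
Local Open Scope complex_scope.

Section Hilbert.
Variables (R : realType) (V : lmodType R[i]) (ip : V -> V -> R[i]).

Definition hnorm (x : V) : R := Num.sqrt (complex.Re (ip x x)).

Definition is_hilbert : Prop :=
  [/\ forall (a : R[i]) (x y z : V), ip (a *: x + y) z = a * ip x z + ip y z,
      forall x y : V, ip y x = (ip x y)^*,
      forall x : V, 0 <= ip x x,
      forall x : V, ip x x = 0 -> x = 0 &
      forall u : nat -> V,
        (forall e : R, 0 < e -> exists N : nat, forall m n : nat,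
            (N <= m)%N -> (N <= n)%N -> hnorm (u m - u n) < e) ->
        exists l : V, forall e : R, 0 < e -> exists N : nat, forall n : nat,
            (N <= n)%N -> hnorm (u n - l) < e].

Definition closed_subspace (S : V -> Prop) : Prop :=
  [/\ S 0,
      forall (a : R[i]) (x y : V), S x -> S y -> S (a *: x + y) &
      forall (u : nat -> V) (l : V), (forall n, S (u n)) ->
        (forall e : R, 0 < e -> exists N : nat, forall n : nat,
            (N <= n)%N -> hnorm (u n - l) < e) -> S l].

Definition is_orth_proj (S : V -> Prop) (P : V -> V) : Prop :=
  forall x : V, S (P x) /\ (forall y : V, S y -> ip (x - P x) y = 0).

Definition linear_op (A : V -> V) : Prop :=
  forall (a : R[i]) (x y : V), A (a *: x + y) = a *: A x + A y.

Definition bounded_on (S : V -> Prop) (A : V -> V) : Prop :=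
  exists M : R, forall x : V, S x -> hnorm (A x) <= M * hnorm x.

Definition selfadjoint (A : V -> V) : Prop :=
  forall x y : V, ip (A x) y = ip x (A y).

Definition nonneg_op (A : V -> V) : Prop := forall x : V, 0 <= ip (A x) x.

Definition opnorm (A : V -> V) : R :=
  inf [set M : R | 0 <= M /\ forall x : V, hnorm (A x) <= M * hnorm x].

(* spectrum of A, regarded as an operator on the (closed) subspace S
   (A is assumed to map S into S): z is NOT in the spectrum iff A - z
   has a bounded two-sided inverse on S. *)
Definition spectrum_on (S : V -> Prop) (A : V -> V) (z : R[i]) : Prop :=
  ~ (exists B : V -> V,
       [/\ forall x, S x -> S (B x),
           linear_op B,
           bounded_on S B,
           forall x, S x -> B (A x - z *: x) = x &
           forall x, S x -> A (B x) - z *: B x = x]).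

Definition is_spec_min (S : V -> Prop) (A : V -> V) (l : R) : Prop :=
  spectrum_on S A l%:C /\ forall z, spectrum_on S A z -> l%:C <= z.

End Hilbert.

(* Main.v *)
Require Import Defs.
From mathcomp Require Import all_boot all_order all_algebra.
From mathcomp Require Import complex.
From mathcomp Require Import classical_sets boolp reals.
From mathcomp Require Import ring lra.
Import Order.TTheory GRing.Theory Num.Theory.
Local Open Scope ring_scope.
Local Open Scope complex_scope.
Set Implicit Arguments. Unset Strict Implicit.

Section Lin.
Variables (R : realType) (V : lmodType R[i]).
Lemma grp2 (a b u v : V) : (a - u) - (b - v) = (a - b) - (u - v).
Proof. by rewrite opprB [v - b]addrC addrACA opprB [v - u]addrC. Qed.
Lemma grp4 (a u v : V) : a - u + v - a = v - u.
Proof. by rewrite addrAC [a - u]addrC addrK addrC. Qed.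
Lemma grp3 (a b c : V) : (a + c) - (b + c) = a - b.
Proof. by rewrite opprD addrACA subrr addr0. Qed.
Variable f : V -> V.
Hypothesis fl : linear_op f.
Lemma lin0 : f 0 = 0.
Proof.
have := fl 1 0 0; rewrite !scale1r addr0.
by move/(congr1 (fun w => w - f 0)); rewrite subrr addrK => /esym.
Qed.
Lemma linD x y : f (x + y) = f x + f y.
Proof. by have := fl 1 x y; rewrite !scale1r => ->. Qed.
Lemma linZ a x : f (a *: x) = a *: f x.
Proof. by have := fl a x 0; rewrite !addr0 lin0 addr0 => ->. Qed.
Lemma linN x : f (- x) = - f x.
Proof. by rewrite -scaleN1r linZ scaleN1r. Qed.
Lemma linB x y : f (x - y) = f x - f y.
Proof. by rewrite linD linN. Qed.
End Lin.

Lemma bern (R : realType) (h : R) n : 0 <= h -> 1 + n%:R * h <= (1 + h) ^+ n.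
Proof.
move=> h0; elim: n => [|n IH]; first by rewrite mul0r addr0 expr0.
rewrite exprS -natr1.
have hn : 0 <= n%:R * h :> R by rewrite mulr_ge0.
nra.
Qed.

Lemma geo (R : realType) (q e : R) : 0 <= q -> q < 1 -> 0 < e ->
  exists N : nat, forall n, (N <= n)%N -> q ^+ n < e.
Proof.
move=> q0 q1 e0.
suff [N hN] : exists N : nat, q ^+ N < e.
  exists N => n hn; rewrite -(subnK hn) exprD.
  apply: le_lt_trans hN; rewrite ler_piMl ?exprn_ge0 //.
  by rewrite exprn_ile1 // ltW.
have [->|qn0] := eqVneq q 0; first by exists 1%N; rewrite expr1.
have qp : 0 < q by rewrite lt0r qn0.
pose h := q^-1 - 1.
have hp : 0 < h by rewrite /h subr_gt0 invf_gt1.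
have eh : 0 <= (e * h)^-1 by rewrite invr_ge0 ltW // mulr_gt0.
exists (Num.bound (e * h)^-1).
have B := archi_boundP eh.
set n := Num.bound _ in B *.
have := @bern R h n (ltW hp).
have -> : 1 + h = q^-1 by rewrite /h addrC subrK.
rewrite exprVn => hb.
have qn : 0 < q ^+ n by rewrite exprn_gt0.
have : 1 < e * h * n%:R.
  by rewrite -ltr_pdivrMl ?mulr_gt0 // mulr1.
move=> H1.
have : (q ^+ n)^-1 > e^-1.
  apply: lt_le_trans hb.
  have ee : e * e^-1 = 1 by rewrite mulfV ?gt_eqF.
  have ei : 0 < e^-1 by rewrite invr_gt0.
  have nh : 0 <= n%:R * h by rewrite mulr_ge0 ?ltW.
  nra.
rewrite ltf_pV2 ?posrE //.
Qed.

Section Hilb.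
Variables (R : realType) (V : lmodType R[i]) (ip : V -> V -> R[i]).
Hypothesis hlin : forall (a : R[i]) (x y z : V), ip (a *: x + y) z = a * ip x z + ip y z.
Hypothesis hconj : forall x y : V, ip y x = (ip x y)^*.
Hypothesis hpos : forall x : V, 0 <= ip x x.
Hypothesis hdef : forall x : V, ip x x = 0 -> x = 0.
Hypothesis hcomp : forall u : nat -> V,
        (forall e : R, 0 < e -> exists N : nat, forall m n : nat,
            (N <= m)%N -> (N <= n)%N -> hnorm ip (u m - u n) < e) ->
        exists l : V, forall e : R, 0 < e -> exists N : nat, forall n : nat,
            (N <= n)%N -> hnorm ip (u n - l) < e.

Definition g (x y : V) : R := complex.Re (ip x y).
Local Notation N := (hnorm ip).

Lemma ip0l z : ip 0 z = 0.
Proof.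
have := hlin 1 0 0 z; rewrite scale1r mul1r addr0.
by move/(congr1 (fun w => w - ip 0 z)); rewrite subrr addrK => /esym.
Qed.

Lemma ipDl x y z : ip (x + y) z = ip x z + ip y z.
Proof. by have := hlin 1 x y z; rewrite scale1r mul1r. Qed.

Lemma ipZl a x z : ip (a *: x) z = a * ip x z.
Proof. by have := hlin a x 0 z; rewrite addr0 ip0l addr0. Qed.

Lemma ipNl x z : ip (- x) z = - ip x z.
Proof. by rewrite -scaleN1r ipZl mulN1r. Qed.

Lemma ipBl x y z : ip (x - y) z = ip x z - ip y z.
Proof. by rewrite ipDl ipNl. Qed.

Lemma ReD (a b : R[i]) : complex.Re (a + b) = complex.Re a + complex.Re b.
Proof. by case: a b => [? ?] [? ?]. Qed.
Lemma ReN (a : R[i]) : complex.Re (- a) = - complex.Re a.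
Proof. by case: a. Qed.
Lemma ReMr (r : R) (w : R[i]) : complex.Re (r%:C * w) = r * complex.Re w.
Proof. case: w => a b /=. by rewrite mul0r subr0. Qed.
Lemma ReJ (a : R[i]) : complex.Re (a^*) = complex.Re a.
Proof. by case: a. Qed.

Lemma gDl x y z : g (x + y) z = g x z + g y z.
Proof. by rewrite /g ipDl ReD. Qed.
Lemma gZl r x z : g (r%:C *: x) z = r * g x z.
Proof. by rewrite /g ipZl ReMr. Qed.
Lemma gNl x z : g (- x) z = - g x z.
Proof. by rewrite /g ipNl ReN. Qed.
Lemma gBl x y z : g (x - y) z = g x z - g y z.
Proof. by rewrite gDl gNl. Qed.
Lemma g0l z : g 0 z = 0.
Proof. by rewrite /g ip0l. Qed.
Lemma gC x y : g x y = g y x.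
Proof. by rewrite /g hconj ReJ. Qed.
Lemma gDr x y z : g z (x + y) = g z x + g z y.
Proof. by rewrite gC gDl !(gC z). Qed.
Lemma gZr r x z : g z (r%:C *: x) = r * g z x.
Proof. by rewrite gC gZl gC. Qed.
Lemma gNr x z : g z (- x) = - g z x.
Proof. by rewrite gC gNl gC. Qed.
Lemma gBr x y z : g z (x - y) = g z x - g z y.
Proof. by rewrite gDr gNr. Qed.
Lemma g0r z : g z 0 = 0.
Proof. by rewrite gC g0l. Qed.

Lemma g_ge0 x : 0 <= g x x.
Proof. by have := hpos x; rewrite lecE => /andP[]. Qed.

Lemma g_eq0 x : g x x = 0 -> x = 0.
Proof.
move=> h; apply: hdef; have := ger0_Im (hpos x).
by move: h; rewrite /g; case: (ip x x) => a b /= -> ->.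
Qed.

Lemma gnorm x : N x ^+ 2 = g x x.
Proof. by rewrite /hnorm sqr_sqrtr // g_ge0. Qed.
Lemma N_ge0 x : 0 <= N x.
Proof. exact: sqrtr_ge0. Qed.
Lemma N_eq0 x : N x = 0 -> x = 0.
Proof. by move=> h; apply: g_eq0; rewrite -gnorm h expr0n. Qed.
Lemma N0 : N 0 = 0.
Proof. by rewrite /hnorm -/(g 0 0) g0l sqrtr0. Qed.

Lemma g_sq x y : g (x + y) (x + y) = g x x + 2 * g x y + g y y.
Proof. rewrite !gDl !gDr (gC y x); ring. Qed.

Lemma g_sqB x y : g (x - y) (x - y) = g x x - 2 * g x y + g y y.
Proof. rewrite !gBl !gBr (gC y x); ring. Qed.

Lemma gZZ r x : g (r%:C *: x) (r%:C *: x) = r ^+ 2 * g x x.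
Proof. rewrite gZl gZr; ring. Qed.

Lemma CS x y : g x y ^+ 2 <= g x x * g y y.
Proof.
have [y0|ny0] := eqVneq (g y y) 0.
  by rewrite (g_eq0 y0) !g0r expr0n mulr0.
have gy : 0 < g y y by rewrite lt0r ny0 g_ge0.
pose r := g x y / g y y.
have := g_ge0 (x - r%:C *: y); rewrite g_sqB gZr gZZ => h.
have hr : r * g y y = g x y by rewrite /r divfK.
have : 0 <= g y y * (g x x - 2 * (r * g x y) + r ^+ 2 * g y y).
  by apply: mulr_ge0 => //; apply: ltW.
have -> : g y y * (g x x - 2 * (r * g x y) + r ^+ 2 * g y y)
   = g x x * g y y - g x y ^+ 2 + (r * g y y - g x y) * (r * g y y - g x y).
  ring.
by rewrite hr subrr mulr0 addr0 subr_ge0.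
Qed.

Lemma CSN x y : `|g x y| <= N x * N y.
Proof.
have h := CS x y; rewrite -!gnorm -exprMn in h.
have p := mulr_ge0 (N_ge0 x) (N_ge0 y).
rewrite ler_norml; apply/andP; split; nra.
Qed.

Lemma CSle x y : g x y <= N x * N y.
Proof. by have := CSN x y; rewrite ler_norml => /andP[]. Qed.
Lemma CSge x y : - (N x * N y) <= g x y.
Proof. by have := CSN x y; rewrite ler_norml => /andP[]. Qed.

Lemma N_sq_le x a : 0 <= a -> g x x <= a ^+ 2 -> N x <= a.
Proof. move=> a0; rewrite -gnorm => h; have := N_ge0 x; nra. Qed.

Lemma N_tri x y : N (x + y) <= N x + N y.
Proof.
apply: N_sq_le; first by rewrite addr_ge0 // N_ge0.
rewrite g_sq -!gnorm; have := CSle x y; nra.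
Qed.

Lemma N_Z r x : N (r%:C *: x) = `|r| * N x.
Proof. by rewrite /hnorm -/(g _ _) gZZ sqrtrM ?sqr_ge0 // sqrtr_sqr. Qed.

Lemma N_opp x : N (- x) = N x.
Proof. by rewrite /hnorm -!/(g _ _) gNl gNr opprK. Qed.

Lemma N_sym x y : N (x - y) = N (y - x).
Proof. by rewrite -N_opp opprB. Qed.


Section Sub.
Variables (S : V -> Prop).
Hypothesis hS : closed_subspace ip S.
Lemma S0 : S 0. Proof. by case: hS. Qed.
Lemma Scomb a x y : S x -> S y -> S (a *: x + y). Proof. by case: hS => _ h _; apply: h. Qed.
Lemma SD x y : S x -> S y -> S (x + y).
Proof. by move=> hx hy; rewrite -[x]scale1r; apply: Scomb. Qed.
Lemma SZ a x : S x -> S (a *: x).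
Proof. by move=> h; rewrite -[_ *: x]addr0; apply: Scomb => //; apply: S0. Qed.
Lemma SN x : S x -> S (- x). Proof. by move=> h; rewrite -scaleN1r; apply: SZ. Qed.
Lemma SB x y : S x -> S y -> S (x - y). Proof. by move=> hx hy; apply: SD => //; apply: SN. Qed.
End Sub.

Section FactB.
Variables (S : V -> Prop) (Pr T : V -> V) (K c : R).
Hypothesis hS : closed_subspace ip S.
Hypothesis PrS : forall x, S (Pr x).
Hypothesis PrId : forall x, S x -> Pr x = x.
Hypothesis Prlin : linear_op Pr.
Hypothesis Tlin : linear_op T.
Hypothesis TS : forall x, S x -> S (T x).
Hypothesis Tb : forall x, S x -> N (T x) <= K * N x.
Hypothesis Tc : forall x, S x -> c * g x x <= g (T x) x.
Hypothesis c0 : 0 < c.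

Lemma lowb x : S x -> c * N x <= N (T x).
Proof.
move=> Sx; have h1 := Tc Sx; have h2 := CSle (T x) x.
rewrite -gnorm in h1; have := N_ge0 x; have := N_ge0 (T x).
have [->|nx] := eqVneq (N x) 0; first by rewrite mulr0.
move=> a b; have xp : 0 < N x by rewrite lt0r nx.
rewrite -(ler_pM2r xp); nra.
Qed.

Lemma Tuniq x y : S x -> S y -> T x = T y -> x = y.
Proof.
move=> Sx Sy e; have := lowb (SB hS Sx Sy); rewrite (linB Tlin) e subrr N0.
move=> h; apply/eqP; rewrite -subr_eq0; apply/eqP; apply: N_eq0.
apply/le_anti/andP; split; last exact: N_ge0.
by rewrite -(ler_pM2l c0) mulr0.
Qed.

Lemma Texists y : S y -> exists x, S x /\ T x = y.
Proof.
move=> Sy.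
pose k := `|K| + c.
have k0 : 0 < k by rewrite /k ltr_wpDl.
have Tk : forall x, S x -> N (T x) <= k * N x.
  move=> x Sx; apply: le_trans (Tb Sx) _; apply: ler_wpM2r; first exact: N_ge0.
  by rewrite /k (le_trans (ler_norm K)) // lerDl ltW.
have ck : c <= k by rewrite /k lerDr.
pose r := c / k ^+ 2.
pose s := c / k.
pose q : R := 1 - s ^+ 2 / 2.
have s0 : 0 < s by rewrite divr_gt0.
have s1 : s <= 1 by rewrite ler_pdivrMr // mul1r.
have rc : r * c = s ^+ 2 by rewrite /r /s; field; rewrite gt_eqF.
have rk : r ^+ 2 * k ^+ 2 = s ^+ 2 by rewrite /r /s; field; rewrite gt_eqF.
have rp : 0 < r by rewrite divr_gt0 // exprn_gt0.
have r0 := ltW rp.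
have q0 : 0 <= q by rewrite /q; nra.
have q1 : q < 1 by rewrite /q; nra.
have contr : forall w, S w -> N (w - r%:C *: T w) <= q * N w.
  move=> w Sw; apply: N_sq_le; first by rewrite mulr_ge0 // N_ge0.
  rewrite g_sqB gZr gZZ (gC w (T w)).
  have h1 := ler_wpM2l r0 (Tc Sw).
  rewrite mulrA rc in h1.
  have h2 : g (T w) (T w) <= k ^+ 2 * g w w.
    rewrite -!gnorm; have := Tk _ Sw; have := N_ge0 (T w); have := N_ge0 w; nra.
  have h3 := ler_wpM2l (sqr_ge0 r) h2.
  rewrite mulrA rk in h3.
  have h4 : (1 - s ^+ 2) * g w w <= q ^+ 2 * g w w.
    apply: ler_wpM2r; first exact: g_ge0.
    rewrite /q; nra.
  rewrite [(q * _)^+2]exprMn gnorm; lra.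
pose F x := (x - r%:C *: T x) + r%:C *: y.
pose xs n := iter n F 0.
have FS : forall x, S x -> S (F x).
  by move=> x Sx; apply: SD => //; [apply: SB => //; apply: SZ => //; apply: TS | apply: SZ].
have xsS : forall n, S (xs n).
  by elim => [|n IH]; [exact: S0 | exact: FS].
have Fdiff : forall a b, F a - F b = (a - b) - r%:C *: T (a - b).
  by move=> a b; rewrite /F grp3 grp2 (linB Tlin) scalerBr.
pose d n := N (xs n.+1 - xs n).
have dq : forall n, d n.+1 <= q * d n.
  move=> n; rewrite /d.
  have -> : xs n.+2 - xs n.+1 = F (xs n.+1) - F (xs n) by [].
  rewrite Fdiff; apply: contr; exact: SB.
have dgeo : forall n, d n <= q ^+ n * d 0.
  elim => [|n IH]; first by rewrite expr0 mul1r.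
  apply: le_trans (dq n) _; rewrite exprS -mulrA; by apply: ler_wpM2l.
have d0p : 0 <= d 0 := N_ge0 _.
have q1' : 0 < 1 - q by rewrite subr_gt0.
have cauchy_aux : forall n j,
    N (xs (n + j)%N - xs n) <= d 0 * (q ^+ n - q ^+ (n + j)) / (1 - q).
  move=> n; elim => [|j IH]; first by rewrite addn0 !subrr N0 mulr0 mul0r.
  rewrite addnS.
  have -> : xs (n + j).+1 - xs n = (xs (n + j).+1 - xs (n + j)) + (xs (n + j) - xs n).
    by rewrite addrA subrK.
  apply: le_trans (N_tri _ _) _.
  have h := dgeo (n + j)%N; rewrite /d in h.
  have E : d 0 * (q ^+ n - q ^+ (n + j).+1) / (1 - q)
      = q ^+ (n + j) * d 0 + d 0 * (q ^+ n - q ^+ (n + j)) / (1 - q).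
    by rewrite exprS; field; rewrite gt_eqF.
  by rewrite E; apply: lerD.
have cauchy : forall n m, (n <= m)%N -> N (xs m - xs n) <= d 0 * q ^+ n / (1 - q).
  move=> n m /subnKC <-; apply: le_trans (cauchy_aux n (m - n)%N) _.
  apply: ler_wpM2r; first by rewrite invr_ge0 ltW.
  apply: ler_wpM2l => //; rewrite lerBlDr lerDl exprn_ge0 //.
have hC : forall e, 0 < e -> exists N0 : nat, forall m n : nat,
    (N0 <= m)%N -> (N0 <= n)%N -> N (xs m - xs n) < e.
  move=> e e0.
  have e' : 0 < e * (1 - q) / (d 0 + 1).
    by rewrite divr_gt0 ?mulr_gt0 // ltr_wpDl.
  have [N0 hN] := geo q0 q1 e'.
  exists N0 => m n hm hn.
  wlog hnm : m n hm hn / (n <= m)%N.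
    move=> W; case: (leqP n m) => h; first exact: W.
    by rewrite N_sym; apply: W => //; exact: ltnW.
  apply: le_lt_trans (cauchy _ _ hnm) _.
  have := hN n hn; rewrite ltr_pdivlMr ?ltr_wpDl // => h.
  rewrite ltr_pdivrMr //.
  have := exprn_ge0 n q0; nra.
have [l hl] := hcomp hC.
have Sl : S l by case: hS => _ _ hcl; exact: hcl xs l xsS hl.
exists l; split => //.
have dTn : forall n, r * N (T (xs n) - y) = d n.
  move=> n; rewrite /d.
  have -> : xs n.+1 - xs n = - (r%:C *: (T (xs n) - y)).
    change (F (xs n) - xs n = - (r%:C *: (T (xs n) - y))).
    by rewrite /F grp4 scalerBr opprB.
  by rewrite N_opp N_Z ger0_norm.
apply/eqP; rewrite -subr_eq0; apply/eqP; apply: N_eq0.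
set p := N (T l - y).
apply/le_anti; rewrite N_ge0 andbT.
rewrite leNgt; apply/negP => pp.
have e1 : 0 < p / (2 * k) by rewrite divr_gt0 // mulr_gt0.
have dp1 : 0 < d 0 + 1 by apply: ltr_wpDl.
have e2 : 0 < r * p / (2 * (d 0 + 1)).
  by apply: divr_gt0; apply: mulr_gt0.
have [N1 h1] := hl _ e1.
have [N2 h2] := geo q0 q1 e2.
pose n := maxn N1 N2.
have A1 := h1 n (leq_maxl _ _).
have A2 := h2 n (leq_maxr _ _).
rewrite ltr_pdivlMr ?mulr_gt0 // in A1.
rewrite ltr_pdivlMr ?mulr_gt0 // in A2.
have A3 := dgeo n.
have A4 : N (T l - y) <= N (T l - T (xs n)) + N (T (xs n) - y).
  have E : T l - y = (T l - T (xs n)) + (T (xs n) - y) by rewrite addrA subrK.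
  rewrite {1}E; exact: N_tri.
have A5 : N (T l - T (xs n)) <= k * N (xs n - l).
  by rewrite -(linB Tlin) N_sym; apply: Tk; apply: SB.
have A6 := dTn n.
have A7 := exprn_ge0 n q0.
have B2 : r * (2 * N (T (xs n) - y)) < r * p.
  rewrite /d in A2 A3 A6; nra.
rewrite ltr_pM2l // in B2.
rewrite -/p in A4.
have := N_ge0 (xs n - l); nra.
Qed.

Lemma Binv : exists B : V -> V, [/\ forall x, S x -> S (B x), linear_op B,
   bounded_on ip S B, forall x, S x -> B (T x) = x & forall x, S x -> T (B x) = x].
Proof.
pose B y := proj1_sig (cid (Texists (PrS y))).
have BS y : S (B y) by rewrite /B; case: cid => x [].
have TB y : T (B y) = Pr y by rewrite /B; case: cid => x [].
exists B; split => //.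
- move=> a x y; apply: Tuniq.
  + exact: BS.
  + by apply: (SD hS); [apply: (SZ hS) | ].
  + by rewrite TB Prlin (linD Tlin) (linZ Tlin) !TB.
- exists c^-1 => y Sy; rewrite -(ler_pM2l c0) mulrA mulfV ?gt_eqF // mul1r.
  by have := lowb (BS y); rewrite TB PrId.
- move=> x Sx; apply: Tuniq; [exact: BS | exact: Sx | rewrite TB PrId //; exact: TS].
- by move=> x Sx; rewrite TB PrId.
Qed.

End FactB.

Lemma shift_lin (A : V -> V) (z : R[i]) : linear_op A -> linear_op (fun x => A x - z *: x).
Proof.
move=> Al a x y; rewrite Al scalerDr scalerA [z * a]mulrC -scalerA scalerBr.
by rewrite opprD addrACA.
Qed.

Lemma shift_S (S : V -> Prop) (A : V -> V) (z : R) : closed_subspace ip S ->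
  (forall x, S x -> S (A x)) -> forall x, S x -> S (A x - z%:C *: x).
Proof. by move=> hS AS x Sx; apply: (SB hS); [apply: AS | apply: (SZ hS)]. Qed.

Lemma shift_bound (S : V -> Prop) (A : V -> V) (K z : R) :
  (forall x, S x -> N (A x) <= K * N x) ->
  forall x, S x -> N (A x - z%:C *: x) <= (`|K| + `|z|) * N x.
Proof.
move=> hK x Sx; apply: le_trans (N_tri _ _) _.
rewrite N_opp N_Z mulrDl; apply: lerD => //.
by apply: le_trans (hK _ Sx) _; apply: ler_wpM2r; [exact: N_ge0 | exact: ler_norm].
Qed.

Lemma shift_g (A : V -> V) (z : R) x y : g (A x - z%:C *: x) y = g (A x) y - z * g x y.
Proof. by rewrite gBl gZl. Qed.

Lemma spec_ge (S : V -> Prop) (Pr A : V -> V) (m z : R) :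
  closed_subspace ip S -> (forall x, S (Pr x)) -> (forall x, S x -> Pr x = x) ->
  linear_op Pr -> linear_op A -> (forall x, S x -> S (A x)) ->
  (exists K, forall x, S x -> N (A x) <= K * N x) ->
  (forall x, S x -> m * g x x <= g (A x) x) ->
  spectrum_on ip S A z%:C -> m <= z.
Proof.
move=> hS PrS PrId Prl Al AS [K hK] hm hsp.
rewrite leNgt; apply/negP => zm.
have Tc : forall x, S x -> (m - z) * g x x <= g (A x - z%:C *: x) x.
  by move=> x Sx; rewrite shift_g mulrBl; have := hm _ Sx; lra.
have c0 : 0 < m - z by rewrite subr_gt0.
have [B [h1 h2 h3 h4 h5]] := Binv hS PrS PrId Prl (shift_lin z%:C Al)
  (shift_S z hS AS) (shift_bound z hK) Tc c0.
by apply: hsp; exists B; split.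
Qed.

Lemma spec_le (S : V -> Prop) (A : V -> V) (l : R) :
  closed_subspace ip S -> linear_op A -> (forall x, S x -> S (A x)) ->
  (exists K, forall x, S x -> N (A x) <= K * N x) ->
  (forall x y, S x -> S y -> g (A x) y = g x (A y)) ->
  (forall z, spectrum_on ip S A z -> l%:C <= z) ->
  forall x, S x -> l * g x x <= g (A x) x.
Proof.
move=> hS Al AS [K hK] hsa hmin x0 Sx0.
rewrite leNgt; apply/negP => hx0.
have nrm : forall x, S x -> N x != 0 -> [/\ S ((N x)^-1%:C *: x),
    g ((N x)^-1%:C *: x) ((N x)^-1%:C *: x) = 1 &
    g (A ((N x)^-1%:C *: x)) ((N x)^-1%:C *: x) = g (A x) x / g x x].
  move=> x Sx nx; split; first exact: (SZ hS).
    by rewrite gZZ -gnorm exprVn mulVf // expf_neq0.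
  by rewrite (linZ Al) gZl gZr -gnorm; field.
have nx0 : N x0 != 0.
  by apply/eqP => h; move: hx0; rewrite (N_eq0 h) g0l g0r mulr0 ltxx.
have [Sx1 gx1 Ax1] := nrm _ Sx0 nx0.
set x1 := _ *: x0 in Sx1 gx1 Ax1.
pose W : set R := fun v => exists x, [/\ S x, g x x = 1 & v = g (A x) x].
have Kb : forall x, S x -> g x x = 1 -> - K <= g (A x) x.
  move=> x Sx gx; have h := CSge (A x) x.
  have hN : N x = 1 by rewrite /hnorm -/(g x x) gx sqrtr1.
  rewrite hN mulr1 in h; apply: le_trans h; rewrite lerN2.
  by have := hK _ Sx; rewrite hN mulr1.
have W1 : W (g (A x1) x1) by exists x1.
have hlb : has_lbound W by exists (- K) => v [x [Sx gx ->]]; exact: Kb.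
have hasinf : has_inf W by split => //; exists (g (A x1) x1).
pose m := inf W.
have gx0 : 0 < g x0 x0 by rewrite -gnorm exprn_gt0 // lt0r nx0 N_ge0.
have mlt : m < l.
  apply: le_lt_trans (ge_inf hlb W1) _.
  by rewrite Ax1 ltr_pdivrMr.
have mbound : forall x, S x -> m * g x x <= g (A x) x.
  move=> x Sx; have [x00|nx] := eqVneq (N x) 0.
    by rewrite (N_eq0 x00) g0l g0r mulr0.
  have [Sx' gx' Ax'] := nrm _ Sx nx.
  have gxp : 0 < g x x by rewrite -gnorm exprn_gt0 // lt0r nx N_ge0.
  have := ge_inf hlb (ex_intro _ _ (And3 Sx' gx' erefl)).
  by rewrite Ax' ler_pdivlMr.
suff msp : spectrum_on ip S A m%:C.
  by have := hmin _ msp; rewrite lecR leNgt mlt.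
move=> [B [BS Bl [M hM] BT TB]].
pose T x := A x - m%:C *: x.
pose K2 := `|K| + `|m|.
have Tl : linear_op T := shift_lin m%:C Al.
have TS : forall x, S x -> S (T x) := shift_S m hS AS.
have Tb : forall x, S x -> N (T x) <= (K2 + 1) * N x.
  move=> x Sx; apply: le_trans (shift_bound m hK Sx) _.
  by apply: ler_wpM2r; [exact: N_ge0 | rewrite lerDl].
have K2p : 0 < K2 + 1 by rewrite ltr_wpDl // addr_ge0.
have Tpos : forall x, S x -> 0 <= g (T x) x.
  by move=> x Sx; rewrite /T shift_g subr_ge0; apply: mbound.
have Tsa : forall x y, S x -> S y -> g (T x) y = g x (T y).
  by move=> x y Sx Sy; rewrite /T shift_g gBr gZr hsa.
have CS2 : forall x, S x -> N (T x) ^+ 2 <= (K2 + 1) * g (T x) x.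
  move=> x Sx; set y := T x; have Sy : S y by apply: TS.
  pose rr := (K2 + 1)^-1.
  have := Tpos (x - rr%:C *: y) (SB hS Sx (SZ hS _ Sy)).
  rewrite (linB Tl) (linZ Tl) gBl !gBr !gZl !gZr (Tsa y x) //.
  rewrite -/y gnorm.
  have h1 : g (T y) y <= (K2 + 1) * g y y.
    apply: le_trans (CSle _ _) _; rewrite -gnorm expr2 mulrA.
    by apply: ler_wpM2r; [exact: N_ge0 | apply: Tb].
  have h2 := ler_wpM2l (sqr_ge0 rr) h1.
  have rK : rr * (K2 + 1) = 1 by rewrite mulVf ?gt_eqF.
  have rp : 0 < rr by rewrite invr_gt0.
  move=> h0.
  have h3 : 0 <= g (T x) x - rr * g y y.
    have : rr * (rr * g (T y) y) <= rr * g y y.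
      rewrite mulrA -expr2; apply: le_trans h2 _.
      by rewrite expr2 -mulrA (mulrA rr (K2 + 1)) rK mul1r.
    lra.
  have := ler_wpM2l (ltW K2p) h3.
  by rewrite mulr0 mulrBr mulrA (mulrC (K2 + 1) rr) rK mul1r subr_ge0.
have M2p : 0 <= M ^+ 2 * (K2 + 1) by rewrite mulr_ge0 ?sqr_ge0 // ltW.
pose eps := (M ^+ 2 * (K2 + 1) + 1)^-1.
have epsp : 0 < eps by rewrite invr_gt0 ltr_wpDl.
have [v [x [Sx gx ->]] hv] := inf_adherent epsp hasinf.
have hN : N x = 1 by rewrite /hnorm -/(g x x) gx sqrtr1.
have h1 : 1 <= M * N (T x).
  by rewrite -hN -{1}(BT _ Sx); apply: hM; apply: TS.
have h2 : g (T x) x < eps by rewrite /T shift_g gx mulr1 ltrBlDl.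
have h3 := CS2 _ Sx.
have NT := N_ge0 (T x).
have h4 : 1 <= M ^+ 2 * N (T x) ^+ 2.
  by rewrite -exprMn; have := h1; nra.
have h5 : M ^+ 2 * N (T x) ^+ 2 <= M ^+ 2 * ((K2 + 1) * g (T x) x).
  by apply: ler_wpM2l => //; exact: sqr_ge0.
have h6 : M ^+ 2 * (K2 + 1) * eps < 1.
  by rewrite ltr_pdivrMr ?mul1r ?ltrDl // ltr_wpDl.
have h7 : M ^+ 2 * ((K2 + 1) * g (T x) x) <= M ^+ 2 * (K2 + 1) * eps.
  by rewrite mulrA; apply: ler_wpM2l => //; exact: ltW.
lra.
Qed.

Lemma opnorm_ok (F : V -> V) :
  (exists M, 0 <= M /\ forall x, N (F x) <= M * N x) ->
  0 <= opnorm ip F /\ forall x, N (F x) <= opnorm ip F * N x.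
Proof.
move=> [M0 hM0]; rewrite /opnorm; set E := (X in inf X).
have ne : exists M, E M by exists M0.
split; first by apply: lb_le_inf => // M [].
move=> x; have [x0|nx] := eqVneq (N x) 0.
  by rewrite x0 mulr0; have := hM0.2 x; rewrite x0 mulr0.
have Nxp : 0 < N x by rewrite lt0r nx N_ge0.
rewrite -ler_pdivrMr //; apply: lb_le_inf => // M [_ hM].
by rewrite ler_pdivrMr.
Qed.

Lemma closedT : closed_subspace ip (fun _ => True).
Proof. by split. Qed.

Lemma main (S : V -> Prop) (P H : V -> V) (lam : R -> R) (laminf : R) :
  closed_subspace ip S ->
  (exists2 x : V, S x & x <> 0) ->
  is_orth_proj ip S P ->
  linear_op H -> bounded_on ip (fun _ => True) H ->
  selfadjoint ip H -> nonneg_op ip H ->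
  (forall t : R, 0 <= t ->
     is_spec_min ip (fun _ => True) (fun x => H x + t%:C *: (x - P x)) (lam t)) ->
  is_spec_min ip S (fun x => P (H x)) laminf ->
  (forall t : R, 0 <= t -> lam t <= laminf) /\
  (forall t : R, 2 * opnorm ip (fun x => H x + x) ^+ 2 <= t ->
     laminf - 4 * opnorm ip (fun x => H x + x) ^+ 2 * (laminf + 1) ^+ 2 / (t + 1)
       <= lam t /\
     laminf - 4 * opnorm ip (fun x => H x + x) ^+ 4 / (t + 1)
       <= laminf - 4 * opnorm ip (fun x => H x + x) ^+ 2 * (laminf + 1) ^+ 2 / (t + 1)).
Proof.
move=> hS [u0 Su0 u0n] hP Hl [MH hMH] hsa hnn hlt hinf.
have PS x : S (P x) by case: (hP x).
have Porth x y : S y -> ip (x - P x) y = 0 by case: (hP x) => _; apply.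
have Puniq x u : S u -> (forall y, S y -> ip (x - u) y = 0) -> u = P x.
  move=> Su hu; have E : P x - u = (x - u) - (x - P x).
    by rewrite grp2 subrr sub0r opprB.
  have : ip (P x - u) (P x - u) = 0.
    by rewrite {1}E ipBl hu ?Porth ?subrr //; apply: (SB hS).
  by move/hdef/eqP; rewrite subr_eq0 => /eqP.
have PId x : S x -> P x = x.
  by move=> Sx; apply/esym/Puniq => // y _; rewrite subrr ip0l.
have Plin : linear_op P.
  move=> a x y; apply/esym/Puniq.
    by apply: (SD hS); [apply: (SZ hS) | ].
  move=> z Sz; rewrite opprD addrACA -scalerBr hlin !Porth //.
  by rewrite mulr0 addr0.
have gorth x y : S y -> g (x - P x) y = 0 by move=> Sy; rewrite /g Porth.
have key x y : g (x - P x) y = g (x - P x) (y - P y).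
  by rewrite gBr (gorth x (P y)) ?subr0.
have Pyth x : g x x = g (P x) (P x) + g (x - P x) (x - P x).
  have := g_sq (P x) (x - P x); rewrite (addrC (P x)) subrK => ->.
  by rewrite (gC (P x)) gorth // mulr0 addr0.
have NPx x : N (x - P x) <= N x.
  apply: N_sq_le; first exact: N_ge0.
  by rewrite gnorm (Pyth x) lerDr g_ge0.
have gHsa x y : g (H x) y = g x (H y) by rewrite /g hsa.
have gHpos x : 0 <= g (H x) x by have := hnn x; rewrite lecE => /andP[].
have Hb : forall x, N (H x) <= MH * N x by move=> x; apply: hMH.
pose Ht (t : R) x := H x + t%:C *: (x - P x).
have Htl t : linear_op (Ht t).
  move=> a x y; rewrite /Ht Hl Plin opprD addrACA -scalerBr scalerDr scalerA.
  by rewrite [t%:C * a]mulrC -scalerA [a *: (H x + _)]scalerDr addrACA.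
have gHt t x y : g (Ht t x) y = g (H x) y + t * g (x - P x) (y - P y).
  by rewrite /Ht gDl gZl key.
have Htsa t x y : g (Ht t x) y = g x (Ht t y).
  rewrite gHt /Ht [g x _]gDr [g x (_ *: _)]gZr gHsa; congr (_ + t * _).
  by rewrite [RHS]gC (key y x) gC.
have Htb t : 0 <= t -> exists K, forall x, True -> N (Ht t x) <= K * N x.
  move=> t0; exists (MH + t) => x _; apply: le_trans (N_tri _ _) _.
  rewrite N_Z ger0_norm // mulrDl; apply: lerD => //.
  by apply: ler_wpM2l.
have spec_t t : 0 <= t -> forall x, lam t * g x x <= g (Ht t x) x.
  move=> t0 x; apply: (spec_le closedT (Htl t) _ (Htb t t0) _ (hlt t t0).2) => //.
pose A x := P (H x).
have Al : linear_op A by move=> a x y; rewrite /A Hl Plin.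
have AS x : S x -> S (A x) by move=> _; apply: PS.
have gPH x y : S y -> g (A x) y = g (H x) y.
  by move=> Sy; have := gorth (H x) y Sy; rewrite gBl => /eqP; rewrite subr_eq0 => /eqP.
have Ab : exists K, forall x, S x -> N (A x) <= K * N x.
  exists MH => x _; apply: le_trans (Hb x).
  apply: N_sq_le; first exact: N_ge0.
  by rewrite gnorm (Pyth (H x)) lerDl g_ge0.
have Asa x y : S x -> S y -> g (A x) y = g x (A y).
  by move=> Sx Sy; rewrite gPH // gHsa [RHS]gC gPH // gC.
have FAinf u : S u -> laminf * g u u <= g (H u) u.
  move=> Su; rewrite -gPH //; apply: (spec_le hS Al AS Ab Asa) => //.
  exact: hinf.2.
have linf0 : 0 <= laminf.
  apply: (spec_ge hS PS PId Plin Al AS Ab) (hinf.1) => x Sx.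
  by rewrite mul0r gPH.
split.
  move=> t t0; apply: (spec_ge hS PS PId Plin Al AS Ab) (hinf.1) => x Sx.
  have := spec_t t t0 x; rewrite gHt PId // subrr g0l mulr0 addr0.
  by rewrite gPH.
have [n0 nb] : 0 <= opnorm ip (fun x => H x + x) /\
    forall x, N (H x + x) <= opnorm ip (fun x => H x + x) * N x.
  apply: opnorm_ok; exists (`|MH| + 1); split; first by rewrite addr_ge0.
  move=> x; apply: le_trans (N_tri _ _) _; rewrite mulrDl mul1r lerD2r.
  apply: le_trans (Hb x) _; apply: ler_wpM2r; [exact: N_ge0 | exact: ler_norm].
set n := opnorm ip _ in n0 nb *.
set L := laminf + 1.
have L1 : 1 <= L by rewrite /L lerDr.
have Ln : L <= n.
  have nu : N u0 != 0 by apply/eqP => /N_eq0.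
  have gu : 0 < g u0 u0 by rewrite -gnorm exprn_gt0 // lt0r nu N_ge0.
  suff : L * g u0 u0 <= n * g u0 u0 by rewrite ler_pM2r.
  have h1 := FAinf _ Su0.
  have h2 := CSle (H u0 + u0) u0.
  have h3 : N (H u0 + u0) * N u0 <= n * g u0 u0.
    have := ler_wpM2r (N_ge0 u0) (nb u0).
    by rewrite -mulrA -expr2 gnorm.
  rewrite gDl in h2.
  apply: le_trans h3; apply: le_trans h2.
  by rewrite /L mulrDl mul1r lerD2r.
move=> t ht.
have n1 : 1 <= n by apply: le_trans Ln.
have t0 : 0 <= t by apply: le_trans ht; rewrite mulr_ge0 // sqr_ge0.
have sp : 0 < t + 1 by rewrite ltr_wpDl.
have hL : L ^+ 2 <= n ^+ 2 by rewrite ler_sqr ?nnegrE ?(le_trans _ L1).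
split; last first.
  rewrite lerD2l lerN2; apply: ler_wpM2r; first by rewrite invr_ge0 ltW.
  rewrite -mulrA (_ : n ^+ 4 = n ^+ 2 * n ^+ 2); last by rewrite -exprD.
  apply: ler_wpM2l => //; apply: ler_wpM2l => //; exact: sqr_ge0.
set d := 4 * n ^+ 2 * L ^+ 2 / (t + 1).
have npos : 0 < n by apply: lt_le_trans n1.
have Lpos : 0 < L by apply: lt_le_trans L1.
have dp : 0 < d by rewrite /d !(divr_gt0, mulr_gt0, exprn_gt0).
have ds : d * (t + 1) = 4 * n ^+ 2 * L ^+ 2 by rewrite /d divfK ?gt_eqF.
have K1 : t + 1 <= 4 * L ^+ 2 * (t + 1 - L).
  have hs : 2 * L ^+ 2 + 1 <= t + 1.
    rewrite lerD2r; apply: le_trans ht; apply: ler_wpM2l => //.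
  have L3 : 0 <= L ^+ 3 by rewrite exprn_ge0 // ltW.
  have p3 : 1 <= L ^+ 2 by nra.
  have p1 : 0 <= (4 * L ^+ 2 - 1) * (t + 1 - (2 * L ^+ 2 + 1)).
    by apply: mulr_ge0; rewrite subr_ge0 //; lra.
  have p2 : 0 <= L ^+ 3 * (2 * L - 1) by apply: mulr_ge0 => //; lra.
  have e3 : L ^+ 3 = L ^+ 2 * L by rewrite exprSr.
  have e4 : L ^+ 2 * L ^+ 2 = L ^+ 3 * L by rewrite -exprSr -exprD.
  nra.
have K2 : n ^+ 2 <= d * (t + 1 - L).
  suff : n ^+ 2 * (t + 1) <= d * (t + 1 - L) * (t + 1) by rewrite ler_pM2r.
  rewrite -mulrA (mulrC (t + 1 - L)) mulrA ds.
  have := ler_wpM2l (sqr_ge0 n) K1; rewrite !mulrA (mulrC (n ^+ 2) 4).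
  by move=> h; apply: le_trans h _; rewrite -!mulrA.
have K3 : n ^+ 2 <= d * (t - laminf + d).
  apply: le_trans K2 _; rewrite ler_wpM2l ?ltW // /L; lra.
have idl : linear_op (@id V) by [].
apply: (spec_ge (Pr := id) closedT _ _ idl (Htl t) _ (Htb t t0) _ ((hlt t t0).1)) => //.
move=> x _.
pose u := P x; pose v := x - P x.
have Su : S u by apply: PS.
have ex : u + v = x by rewrite /u /v addrC subrK.
have gxx : g x x = N u ^+ 2 + N v ^+ 2 by rewrite !gnorm Pyth.
have gvu : g u v = 0 by rewrite gC gorth.
have gHt' : g (Ht t x) x = g (H x) x + t * N v ^+ 2 by rewrite gHt gnorm.
clearbody u v.
have gHx : g (H x) x = g (H u) u + 2 * g (H u) v + g (H v) v.
  rewrite -ex (linD Hl) gDl !gDr (gHsa v u) (gC v (H u)).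
  ring.
have hHu : g (H u) v = g (H u + u) v by rewrite gDl gvu addr0.
have b1 : - (n * N u * N v) <= g (H u + u) v.
  apply: le_trans (CSge (H u + u) v); rewrite lerN2.
  by apply: ler_wpM2r; [exact: N_ge0 | exact: nb].
have b2 := gHpos v.
have b3 : laminf * N u ^+ 2 <= g (H u) u.
  by rewrite gnorm; apply: FAinf.
have Q : 0 <= d * N u ^+ 2 - 2 * n * N u * N v + (t - laminf + d) * N v ^+ 2.
  have e : d * (d * N u ^+ 2 - 2 * n * N u * N v + (t - laminf + d) * N v ^+ 2)
      = (d * N u - n * N v) ^+ 2 + (d * (t - laminf + d) - n ^+ 2) * N v ^+ 2.
    ring.
  have : 0 <= d * (d * N u ^+ 2 - 2 * n * N u * N v + (t - laminf + d) * N v ^+ 2).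
    by rewrite e addr_ge0 ?sqr_ge0 // mulr_ge0 ?sqr_ge0 // subr_ge0.
  by rewrite pmulr_rge0.
rewrite gHt' gHx gxx hHu.
lra.
Qed.

End Hilb.

Theorem corollary4p4 (R : realType) (V : lmodType R[i]) (ip : V -> V -> R[i])
    (S : V -> Prop) (P H : V -> V) (lam : R -> R) (laminf : R) :
  is_hilbert ip ->
  closed_subspace ip S ->
  (exists2 x : V, S x & x <> 0) ->
  (exists x : V, ~ S x) ->
  is_orth_proj ip S P ->
  linear_op H -> bounded_on ip (fun _ => True) H ->
  selfadjoint ip H -> nonneg_op ip H ->
  (* lam t = min sigma(H_t),  H_t = H + t Q^* Q,  Q^* Q x = x - P x *)
  (forall t : R, 0 <= t ->
     is_spec_min ip (fun _ => True) (fun x => H x + t%:C *: (x - P x)) (lam t)) ->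
  (* laminf = min sigma[P H P^*], as an operator on S *)
  is_spec_min ip S (fun x => P (H x)) laminf ->
  (forall t : R, 0 <= t -> lam t <= laminf) /\
  (forall t : R, 2 * opnorm ip (fun x => H x + x) ^+ 2 <= t ->
     laminf - 4 * opnorm ip (fun x => H x + x) ^+ 2 * (laminf + 1) ^+ 2 / (t + 1)
       <= lam t /\
     laminf - 4 * opnorm ip (fun x => H x + x) ^+ 4 / (t + 1)
       <= laminf - 4 * opnorm ip (fun x => H x + x) ^+ 2 * (laminf + 1) ^+ 2 / (t + 1)).
Proof.
move=> [hlin hconj hpos hdef hcomp] hS hne _ hP Hl Hb hsa hnn hlt hinf.
exact: (main hlin hconj hpos hdef hcomp hS hne hP Hl Hb hsa hnn hlt hinf).
Qed.
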